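(* Let $b>1$, $p\ge1$, $R\subseteq\{0,\ldots,p-1\}$ with $(p,R)$ proper. Let $k$ be the greatest divisor of $p$ coprime with $b$ and $d=p/k$. Then for all distinct integers $i,i'$ with $0\le i,i'<k$, the states $id$ and $i'd$ of $\mathcal{A}_{R,p}$ are not Nerode-equivalent.
   Context: $A_b=\{0,\ldots,b-1\}$. $\mathcal{A}_{R,p}$: complete deterministic automaton over $A_b$ with states $\{0,\ldots,p-1\}$, initial $0$, final states $R$, transitions $n\xrightarrow{a}(nb+a)\bmod p$. $(p,R)$ is proper if $p$ is the smallest period of $R+p\mathbb{N}$, i.e. there are no $1\le p'<p$, $R'\subseteq\{0,\ldots,p'-1\}$ with $R+p\mathbb{N}=R'+p'\mathbb{N}$. Two states $s,s'$ are Nerode-equivalent if for every word $u$, $s\cdot u$ is final iff $s'\cdot u$ is final ($s\cdot u$ = state reached from $s$ reading $u$). *)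

(* Defs.v *)
From mathcomp Require Import all_boot.
Set Implicit Arguments. Unset Strict Implicit. Unset Printing Implicit Defensive.

Definition is_word (b : nat) (u : seq nat) : bool := all (fun a => a < b) u.

Definition delta (b p n a : nat) : nat := (n * b + a) %% p.

Definition run (b p s : nat) (u : seq nat) : nat := foldl (delta b p) s u.

Definition perset (R : pred nat) (p : nat) (x : nat) : Prop :=
  exists r n, R r /\ x = r + p * n.

(* (p,R) proper: p is the smallest period of R + pN. *)
Definition proper_pair (p : nat) (R : pred nat) : Prop :=
  ~ exists p' (R' : pred nat),
      [/\ 1 <= p', p' < p, (forall r, R' r -> r < p') &
          (forall x, perset R p x <-> perset R' p' x)].

Definition nerode_equiv (b p : nat) (R : pred nat) (s s' : nat) : Prop :=
  forall u : seq nat, is_word b u -> R (run b p s u) = R (run b p s' u).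

(* Main.v *)
Require Import Defs.
From mathcomp Require Import all_boot.
From mathcomp Require Import zify.

Fixpoint digs (b n v : nat) : seq nat :=
  if n is n'.+1 then rcons (digs b n' (v %/ b)) (v %% b) else [::].

Lemma digs_word b n v : 0 < b -> is_word b (digs b n v).
Proof.
move=> b0; elim: n v => [|n IH] v //=.
by rewrite /is_word all_rcons ltn_mod b0 /=; apply: IH.
Qed.

Lemma run_digs b p s n v : 0 < b -> s < p -> v < b ^ n ->
  run b p s (digs b n v) = (s * b ^ n + v) %% p.
Proof.
move=> b0 sp; elim: n v => [|n IH] v /=.
  by rewrite expn0 muln1; case: v => // _; rewrite addn0 modn_small.
move=> vlt.
rewrite /run foldl_rcons -/(run b p s _) IH; last by rewrite ltn_divLR // -expnSr.
rewrite /delta -modnDml modnMml modnDml mulnDl -mulnA -expnSr -addnA.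
by rewrite -divn_eq.
Qed.

Lemma perset_mod (R : pred nat) p x : 0 < p -> (forall r, R r -> r < p) ->
  perset R p x <-> R (x %% p).
Proof.
move=> p0 HR; split.
  case=> r [n [Rr ->]]. by rewrite addnC mulnC modnMDl modn_small ?HR.
move=> H; exists (x %% p), (x %/ p); split => //.
by rewrite addnC mulnC -divn_eq.
Qed.

Theorem lemma19 (b p : nat) (R : pred nat) (k : nat) :
  1 < b -> 1 <= p ->
  (forall r, R r -> r < p) ->
  proper_pair p R ->
  k %| p -> coprime k b ->
  (forall k', k' %| p -> coprime k' b -> k' <= k) ->
  forall i i' : nat, i < k -> i' < k -> i != i' ->
  ~ nerode_equiv b p R (i * (p %/ k)) (i' * (p %/ k)).
Proof.
move=> b1 p1 HR Hprop kp kb _.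
have b0 : 0 < b by apply: ltnW.
move=> i i' Hi Hi' Hne.
wlog lt : i i' Hi Hi' Hne / i < i'.
  move=> W; case: (ltngtP i i') => [h|h|h]; first by apply: W.
  - move=> N; apply: (W i' i) => //; first by rewrite eq_sym.
    by move=> u uw; rewrite N.
  - by rewrite h eqxx in Hne.
move=> N.
set d := p %/ k.
have k0 : 0 < k by apply: leq_ltn_trans Hi'; apply: leq0n.
have pkd : p = k * d by rewrite /d mulnC divnK.
have d0 : 0 < d by rewrite /d divn_gt0 // dvdn_leq.
have sp : forall j, j < k -> j * d < p.
  by move=> j jk; rewrite pkd ltn_pmul2r.
set m := p.
have pbm : p < b ^ m by apply: ltn_expl.
set f := fun y => R (y %% p).
set A := i * d * b ^ m.
set c := (i' - i) * d * b ^ m.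
have Hc : i' * d * b ^ m = A + c.
  by rewrite /A /c -!mulnDl subnKC // ltnW.
have H1 : forall x, f (A + x) = f (A + c + x).
  move=> x; rewrite /f -(modnDmr A) -(modnDmr (A + c)).
  have xp : x %% p < b ^ m by apply: ltn_trans pbm; rewrite ltn_mod.
  rewrite /A -Hc -!run_digs ?sp //.
  by apply: N; apply: digs_word.
have H2 : forall y, f y = f (y + c).
  move=> y.
  have -> : f y = f (p * A + y) by rewrite /f mulnC modnMDl.
  rewrite -{1}(prednK p1) mulSn -addnA H1.
  have -> : A + c + (p.-1 * A + y) = p * A + (y + c).
    have e : p * A = p.-1 * A + A by rewrite -mulSnr prednK.
    rewrite e; lia.
  by rewrite /f mulnC modnMDl.
have H3 : forall j y, f y = f (y + j * c).
  elim=> [|j IH] y; first by rewrite addn0.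
  by rewrite (IH y) (H2 (y + j * c)) mulSnr addnA.
set g := gcdn p c.
have H4 : forall y, f y = f (y + g).
  move=> y; case: (Bezoutl c p1) => a _ /dvdnP [q Hq].
  rewrite (H3 a (y + g)) -addnA Hq addnC /f modnMDl //.
have H5 : forall n y, f y = f (y + n * g).
  elim=> [|n IH] y; first by rewrite addn0.
  by rewrite (IH y) (H4 (y + n * g)) mulSnr addnA.
have g0 : 0 < g by rewrite gcdn_gt0 p1.
have gp : g < p.
  rewrite ltn_neqAle dvdn_leq ?dvdn_gcdl // andbT.
  apply/eqP=> gE.
  have : p %| c by rewrite -gE dvdn_gcdr.
  rewrite pkd /c mulnAC dvdn_pmul2r // Gauss_dvdl; last by apply: coprimeXr.
  move/dvdn_leq; rewrite subn_gt0 => /(_ lt); lia.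
apply: Hprop; exists g, [pred r | (r < g) && R r]; split => //.
  by move=> r /andP[].
move=> x; rewrite !perset_mod //; last by move=> r /andP[].
rewrite /= ltn_mod g0 /=.
have : f x = f (x %% g).
  by rewrite {1}(divn_eq x g) addnC -H5.
by rewrite /f (modn_small (ltn_trans (ltn_pmod x g0) gp)) => ->.
Qed.
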